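(* Let $T$ be a tree with at least $3$ vertices and $v\in V(T)$. Then \[ f_{T,v}(v)=2+\max_{\substack{S\subseteq T\\ v\in V(S)}}\Bigg(\min_{P\in\mathcal{P}_S(v)}\sum_{w\in V(P)}\big(\deg_S(w)-2\big)\Bigg), \] where $S$ ranges over the subtrees (connected subgraphs) of $T$ containing $v$.
   Context: For a tree $T$ rooted at $v$, the values $f_{T,v}(w)$, $w\in V(T)$, are defined recursively: if $w$ has no children (no descendants) in the rooted tree, $f_{T,v}(w)=0$; otherwise let $u_0,\dots,u_k$ be the children of $w$, let $T_i$ be the subtree consisting of $u_i$ and all its descendants, rooted at $u_i$, and order them so that $c_i:=f_{T_i,u_i}(u_i)$ satisfy $c_0\ge c_1\ge\cdots\ge c_k$; then $f_{T,v}(w)=\max_{0\le i\le k}(i+c_i)$. (Note $f_{T,v}(w)=f_{T_w,w}(w)$ where $T_w$ is the subtree of descendants of $w$.) For a subtree $S$ and $w\in V(S)$, $\deg_S(w)$ is the degree of $w$ in $S$. $\mathcal{P}_S(v)$ is the set of maximal paths in $S$ having $v$ as an endpoint (if $S$ is the single vertex $v$, this is the one-vertex path). *)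

(* Defs.v *)
From HB Require Import structures.
From mathcomp Require Import all_boot all_order all_algebra.
Set Implicit Arguments. Unset Strict Implicit. Unset Printing Implicit Defensive.
Import Order.TTheory GRing.Theory Num.Theory.

(* A cycle is a closed walk
   x0 x1 ... xk x0 through at least 3 pairwise distinct vertices. *)
Definition is_tree (V : finType) (e : rel V) : Prop :=
  symmetric e /\ irreflexive e /\
  (forall x y : V, connect e x y) /\
  (forall c : seq V, cycle e c -> uniq c -> size c < 3).

Definition avoid (V : finType) (e : rel V) (w : V) : rel V :=
  [rel x y | [&& e x y, x != w & y != w]].

(* Children of w in the tree e rooted at r: neighbours u of w such that every
   path from u to the root goes through w. *)
Definition children (V : finType) (e : rel V) (r w : V) : seq V :=
  [seq u <- enum V | e w u && ~~ connect (avoid e w) u r].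

(* f computed with a recursion fuel n (the depth of the tree is < #|V|, so
   fuel #|V| suffices). *)
Fixpoint f_fuel (V : finType) (e : rel V) (r : V) (n : nat) (w : V) : nat :=
  match n with
  | 0 => 0
  | n'.+1 =>
      let cs := sort geq [seq f_fuel e r n' u | u <- children e r w] in
      \max_(i < size cs) (i + nth 0 cs i)
  end.

Definition f_val (V : finType) (e : rel V) (r w : V) : nat :=
  f_fuel e r #|V| w.

(* A subgraph S = (A, F) with vertex set A and (symmetric) edge set F of
   ordered pairs; it is a subtree containing v when it is connected. *)
Definition subtree_at (V : finType) (e : rel V) (v : V)
    (A : {set V}) (F : {set V * V}) : Prop :=
  v \in A /\
  (forall x y, (x, y) \in F -> [&& e x y, x \in A & y \in A]) /\
  (forall x y, (x, y) \in F -> (y, x) \in F) /\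
  (forall x y, x \in A -> y \in A -> connect (fun a b => (a, b) \in F) x y).

Definition degS (V : finType) (F : {set V * V}) (w : V) : nat :=
  #|[set x | (w, x) \in F]|.

(* Paths of S starting at v (vertices distinct, consecutive ones adjacent in
   S), maximal among paths having v as endpoint, i.e. not extendable at the
   other end. For S = {v} this is the one-vertex path [:: v]. *)
Definition max_path_from (V : finType) (A : {set V}) (F : {set V * V})
    (v : V) (P : seq V) : Prop :=
  exists p : seq V,
    [/\ P = v :: p, v \in A, path (fun a b => (a, b) \in F) v p, uniq P &
        forall x, (last v p, x) \in F -> x \in P].

Definition path_cost (V : finType) (F : {set V * V}) (P : seq V) : int :=
  (\sum_(w <- P) ((degS F w)%:Z - 2))%R.

Definition is_min_cost (V : finType) (A : {set V}) (F : {set V * V})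
    (v : V) (m : int) : Prop :=
  (exists P, max_path_from A F v P /\ path_cost F P = m) /\
  (forall P, max_path_from A F v P -> (m <= path_cost F P)%R).

(* Main.v *)
Require Import Defs.
From HB Require Import structures.
From mathcomp Require Import all_boot all_order all_algebra.
From mathcomp Require Import zify.
Import Order.TTheory GRing.Theory Num.Theory.
Set Implicit Arguments. Unset Strict Implicit. Unset Printing Implicit Defensive.


Lemma geq_trans' : transitive geq.
Proof. move=> b a c /= h1 h2; exact: leq_trans h2 h1. Qed.

Lemma geq_total' : total geq.
Proof. by move=> a b /=; rewrite leq_total. Qed.

Lemma sorted_count (s : seq nat) i c :
  sorted geq s -> nth 0 s i < c -> count (fun y => c <= y) s <= i.
Proof.
elim: s i => [|a s IH] i //= srt.
case: i => [|i] /= h.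
  have al := order_path_min geq_trans' srt.
  rewrite (@eq_in_count _ _ pred0) ?count_pred0.
    by move: h; rewrite ltnNge; case: (c <= a).
  move=> y /(allP al) /= ya; apply/negbTE; rewrite -ltnNge; exact: leq_ltn_trans ya h.
have := IH i (path_sorted srt) h; case: (c <= a) => /=; lia.
Qed.

Definition fmax (s : seq nat) := \max_(i < size s) (i + nth 0 s i).

Lemma fmax_ge s d c : 0 < d -> d <= count (fun y => c <= y) s ->
  d.-1 + c <= fmax (sort geq s).
Proof.
move=> d0 hd; set t := sort geq s.
have st : sorted geq t := sort_sorted geq_total' s.
have ct : count (fun y => c <= y) t = count (fun y => c <= y) s by rewrite count_sort.
have hsz : d.-1 < size t.
  have := count_size (fun y => c <= y) t; rewrite ct; lia.
have hc : c <= nth 0 t d.-1.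
  rewrite leqNgt; apply/negP => h; have := sorted_count st h; rewrite ct; lia.
rewrite /fmax; have := @leq_bigmax _ (fun i : 'I_(size t) => i + nth 0 t i) (Ordinal hsz).
rewrite /=; lia.
Qed.

Lemma fmax_attain s : 0 < size s -> exists2 i, i < size s & fmax s = i + nth 0 s i.
Proof.
move=> h; rewrite /fmax (bigop.bigmax_eq_arg (Ordinal h)) //.
set j := [arg max_(_ > _ | _) _]; by exists j.
Qed.

Lemma fmax_nil : fmax [::] = 0.
Proof. by rewrite /fmax big_ord0. Qed.

Lemma nth_sorted_le t i j : sorted geq t -> i <= j -> j < size t -> nth 0 t j <= nth 0 t i.
Proof.
move=> st ij js; have := sorted_leq_nth geq_trans' (fun x => leqnn x) 0 st.
move=> /(_ i j); rewrite !inE /=; apply => //; exact: leq_ltn_trans ij js.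
Qed.


Lemma seq_min (T : eqType) (g : T -> nat) (s : seq T) :
  s != [::] -> exists2 u, u \in s & forall y, y \in s -> g u <= g y.
Proof.
elim: s => [//|a s IH] _.
case: (eqVneq s [::]) => [->|sn].
  by exists a => [|y]; rewrite ?inE // => /eqP->.
have [u us umin] := IH sn.
case: (leqP (g a) (g u)) => h.
  exists a; first exact: mem_head.
  move=> y; rewrite inE => /orP[/eqP->//|ys]; exact: leq_trans h (umin y ys).
exists u; first by rewrite inE us orbT.
move=> y; rewrite inE => /orP[/eqP->|ys]; [exact: ltnW | exact: umin].
Qed.

Lemma mem_rcons_sub (T : eqType) (x z l : T) q : z \in x :: q -> z \in x :: rcons q l.
Proof. by rewrite !inE mem_rcons inE => /orP[->|->]; rewrite ?orbT. Qed.

Section Tree.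
Variables (V : finType) (e : rel V) (r : V).
Hypothesis esym : symmetric e.
Hypothesis eirr : irreflexive e.
Hypothesis econn : forall x y : V, connect e x y.
Hypothesis eacyc : forall c : seq V, cycle e c -> uniq c -> size c < 3.

Local Notation ch := (children e r).

Lemma childP w u : (u \in ch w) = e w u && ~~ connect (avoid e w) u r.
Proof. by rewrite mem_filter mem_enum andbT. Qed.

Lemma avoid_sym w : symmetric (avoid e w).
Proof. by move=> x y; rewrite /avoid /= esym; case: (x != w); case: (y != w); rewrite ?andbT ?andbF. Qed.

Lemma avoid_sub w : subrel (avoid e w) e.
Proof. by move=> x y /and3P[]. Qed.

Lemma connect_avoid_to w x : connect (avoid e w) x w -> x = w.
Proof.
case/connectP => p pth lp; move: pth lp.
case/lastP: p => [//|q y]; rewrite rcons_path last_rcons => /andP[_ /and3P[_ _]].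
by move=> /negP nyw yw; case: nyw; rewrite -yw.
Qed.

Lemma root_nbr_child x : e r x -> x \in ch r.
Proof.
move=> exr; rewrite childP exr /=; apply/negP => /connect_avoid_to xr.
by move: exr; rewrite xr eirr.
Qed.

Lemma root_not_child w : r \notin ch w.
Proof. by rewrite childP connect0 andbF. Qed.

Lemma path_avoid (R : rel V) u y p :
  subrel R e -> path R y p -> u \notin y :: p -> path (avoid e u) y p.
Proof.
move=> sR; elim: p y => [//|z p IH] y /= /andP[Ryz pz].
rewrite !inE negb_or => /andP[nuy]; rewrite negb_or => /andP[nuz nup].
apply/andP; split; first by rewrite /avoid /= sR // eq_sym nuy eq_sym nuz.
apply: IH => //.
by rewrite inE negb_or nuz.
Qed.

Lemma avoid_notin w x p : path (avoid e w) x p -> w \notin p.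
Proof.
elim: p x => [//|z p IH] x /= /andP[/and3P[_ _ zw] pz].
by rewrite inE negb_or eq_sym zw (IH z).
Qed.

Lemma nonchild_unique w x y :
  e w x -> e w y -> x \notin ch w -> y \notin ch w -> x = y.
Proof.
move=> ewx ewy; rewrite !childP ewx ewy /= !negbK => cx cy.
have cxy : connect (avoid e w) x y.
  apply: connect_trans cx _; by rewrite (sym_connect_sym (avoid_sym w)).
case: (eqVneq x y) => // nxy; exfalso.
case/connectP: cxy => p pth lp.
case/shortenP: pth lp => p' pth' uq' _ lp'.
have xw : x != w by apply/eqP => xw; move: ewx; rewrite xw eirr.
have hc : cycle e (w :: x :: p').
  rewrite /cycle rcons_cons /= ewx rcons_path (sub_path (@avoid_sub w) pth') /=.
  by rewrite -lp' esym.
have hu : uniq (w :: x :: p').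
  by rewrite cons_uniq uq' andbT inE negb_or eq_sym xw (avoid_notin pth').
have := eacyc hc hu.
case: p' {pth' uq' hc hu} lp' => [|z p'] //= lp' _.
by move: nxy; rewrite lp' eqxx.
Qed.

Lemma child_parent_connect w u : u \in ch w -> connect (avoid e u) w r.
Proof.
rewrite childP => /andP[ewu nc].
have := econn w r; case/connectP => p pth lp.
case/shortenP: pth lp => p' pth' uq' _ lp'.
have uw : u != w by apply/eqP => uw; move: ewu; rewrite uw eirr.
case uin: (u \in w :: p').
  rewrite inE (negbTE uw) /= in uin.
  case/splitPr: uin pth' uq' lp' => p1 p2.
  rewrite cat_path => /andP[_ /= /andP[_ pth2]].
  rewrite mem_cat negb_or => /andP[/andP[_ wnot] _].
  rewrite last_cat /= => lp2.
  exfalso; move/negP: nc; apply.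
  apply/connectP; exists p2 => //.
  by apply: (path_avoid _ pth2).
apply/connectP; exists p' => //; apply: (path_avoid _ pth') => //.
by rewrite uin.
Qed.

Lemma child_not_parent w u : u \in ch w -> w \notin ch u.
Proof. by move=> /child_parent_connect c; rewrite childP c andbF. Qed.

Lemma child_e w u : u \in ch w -> e w u.
Proof. by rewrite childP => /andP[]. Qed.

Lemma parent_unique y z x : x \in ch y -> x \in ch z -> y = z.
Proof.
move=> xy xz; apply: (@nonchild_unique x).
- by rewrite esym child_e.
- by rewrite esym child_e.
- exact: child_not_parent.
- exact: child_not_parent.
Qed.

Definition D w := [set y | (y == w) || ~~ connect (avoid e w) y r].

Lemma D_self w : w \in D w.
Proof. by rewrite inE eqxx. Qed.

Lemma D_lt w u : u \in ch w -> #|D u| < #|D w|.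
Proof.
move=> uw; apply: proper_card; apply/properP; split.
  apply/subsetP => y; rewrite !inE => /orP[/eqP->|nc].
    by move: uw; rewrite childP => /andP[_ ->]; rewrite orbT.
  apply/orP; case: (eqVneq y w) => [->|yw]; [by left|right].
  apply/negP => cyr; move/negP: nc; apply.
  case/connectP: cyr => p pth lp.
  case uin: (u \in y :: p).
    have cyu := path_connect pth uin.
    exfalso; move: uw; rewrite childP => /andP[_ /negP]; apply.
    rewrite (sym_connect_sym (avoid_sym w)) in cyu.
    apply: connect_trans cyu _; apply/connectP; by exists p.
  apply/connectP; exists p => //; apply: (path_avoid _ pth) => //.
    exact: avoid_sub.
  by rewrite uin.
exists w; first exact: D_self.
rewrite inE negb_or negbK child_parent_connect // andbT.
by apply/eqP => wu; move: (child_e uw); rewrite wu eirr.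
Qed.

Lemma D_pos w : 0 < #|D w|.
Proof. by apply/card_gt0P; exists w; exact: D_self. Qed.

Local Notation fv := (f_val e r).

Lemma fuel_eq n m w : #|D w| <= n -> #|D w| <= m -> f_fuel e r n w = f_fuel e r m w.
Proof.
elim: n m w => [|n IH] [|m] w hn hm; try by (move: (D_pos w); lia).
rewrite /=.
have -> : [seq f_fuel e r n u | u <- ch w] = [seq f_fuel e r m u | u <- ch w].
  apply/eq_in_map => u hu; apply: IH; have := D_lt hu; lia.
by [].
Qed.

Lemma fuel_stable n w : #|D w| <= n -> f_fuel e r n w = fv w.
Proof. by move=> h; apply: fuel_eq h (max_card _). Qed.

Definition cs w := sort geq [seq fv u | u <- ch w].

Lemma f_rec w : fv w = fmax (cs w).
Proof.
rewrite {1}/f_val; have hD : #|D w| <= #|V| := max_card _.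
have hp := D_pos w.
move: hD; case: #|V| => [|n] hD; first by lia.
rewrite /= /fmax /cs.
have -> : [seq f_fuel e r n u | u <- ch w] = [seq fv u | u <- ch w].
  apply/eq_in_map => u hu; apply: fuel_stable; have := D_lt hu; lia.
by [].
Qed.

Lemma desc_D (R : rel V) x p : subrel R (fun a b => b \in ch a) -> path R x p ->
  (forall z, z \in p -> #|D z| < #|D x|) /\ uniq (x :: p).
Proof.
move=> sR; elim: p x => [|y p IH] x /=; first by [].
case/andP => Rxy pth; have lt := D_lt (sR _ _ Rxy).
have [h1 h2] := IH y pth.
have h3 : forall z, z \in y :: p -> #|D z| < #|D x|.
  move=> z; rewrite inE => /orP[/eqP->//|zp]; exact: ltn_trans (h1 z zp) lt.
split => //; apply/andP; split; last exact: h2.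
apply/negP => /h3; by rewrite ltnn.
Qed.

Lemma desc_last (R : rel V) x p : subrel R (fun a b => b \in ch a) -> path R x p ->
  forall z, z \in x :: p -> #|D (last x p)| <= #|D z|.
Proof.
move=> sR; elim: p x => [|y p IH] x /=.
  by move=> _ z; rewrite inE => /eqP->.
case/andP => Rxy pth; have lt := D_lt (sR _ _ Rxy).
move=> z; rewrite inE => /orP[/eqP->|zp].
  have := IH y pth y (mem_head _ _); lia.
exact: IH.
Qed.

Definition Fch (F : {set V * V}) w := [seq u <- ch w | (w,u) \in F].

Lemma ch_uniq w : uniq (ch w).
Proof. by rewrite filter_uniq // enum_uniq. Qed.

Lemma deg_bound (F : {set V * V}) w : (forall x y, (x,y) \in F -> e x y) ->
  degS F w <= size (Fch F w) + (w != r).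
Proof.
move=> hF; rewrite /degS.
have sub : [set x | (w,x) \in F] \subset
    [set x in Fch F w] :|: [set x | e w x && (x \notin ch w)].
  apply/subsetP => x; rewrite !inE mem_filter => wx; rewrite wx /=.
  case: (x \in ch w) => //=; rewrite andbT; exact: hF.
apply: leq_trans (subset_leq_card sub) _.
rewrite cardsU; apply: leq_trans (leq_subr _ _) _.
apply: leq_add.
  rewrite cardsE; have uq : uniq (Fch F w) by rewrite filter_uniq // ch_uniq.
  by move/card_uniqP: uq => ->.
case: (eqVneq w r) => [->|wr] /=.
  rewrite leqn0 cards_eq0; apply/eqP/setP => x; rewrite !inE; apply/negbTE.
  by apply/negP => /andP[ex]; rewrite root_nbr_child.
apply/card_le1P => x; rewrite inE => /andP[ex nx] y; rewrite !inE.
apply/idP/idP => [/andP[ey ny]|/eqP->]; last by rewrite ex nx.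
by apply/eqP; apply: (nonchild_unique ey ex).
Qed.

Definition FC (F : {set V * V}) := fun a b => (b \in ch a) && ((a,b) \in F).

Lemma UB_rec (F : {set V * V}) : (forall x y, (x,y) \in F -> e x y) ->
  forall n x, #|D x| <= n -> exists p, [/\ path (FC F) x p,
    (forall u, u \in ch (last x p) -> (last x p, u) \notin F) &
    (path_cost F (x :: p) <= (fv x)%:Z - 1 - (nat_of_bool (x == r))%:Z)%R].
Proof.
move=> hF; elim=> [|n IH] x hx; first by (move: (D_pos x); lia).
have hdeg := deg_bound x hF.
have fx0 := leq0n (fv x).
case hF0: (Fch F x) => [|u0 l].
  exists [::]; split => //.
    move=> u /= uch; apply/negP => ux.
    have : u \in Fch F x by rewrite mem_filter ux uch.
    by rewrite hF0.
  rewrite /path_cost big_cons big_nil; rewrite hF0 /= in hdeg.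
  case: (x == r) hdeg => /= hdeg; lia.
have sn : Fch F x != [::] by rewrite hF0.
have [u uin umin] := @seq_min _ fv (Fch F x) sn.
move: (uin); rewrite mem_filter => /andP[xuF uch].
have [p [pth plast pcost]] := IH u (leq_trans (D_lt uch) hx).
exists (u :: p); split => //.
  by rewrite /= /FC uch xuF.
have ur : (u == r) = false.
  by apply/negbTE/negP => /eqP ur; move: uch; rewrite ur (negbTE (root_not_child x)).
rewrite ur /= in pcost.
have hfx : (size (Fch F x)).-1 + fv u <= fv x.
  rewrite (f_rec x) /cs; apply: fmax_ge; first by rewrite hF0.
  rewrite count_map.
  have : size (Fch F x) = count (preim fv (fun y => fv u <= y)) (Fch F x).
    by symmetry; apply/eqP; rewrite -all_count; apply/allP => y yin; exact: umin.
  move=> ->; rewrite count_filter; apply: sub_count => y /= /andP[] //.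
have hsz : 0 < size (Fch F x) by rewrite hF0.
rewrite /path_cost big_cons -/(path_cost F (u :: p)).
move: pcost hfx hsz hdeg; case: (x == r) => /=; lia.
Qed.

Lemma UB_main (A : {set V}) (F : {set V * V}) (m : int) :
  subtree_at e r A F -> is_min_cost A F r m -> (2 + m <= Posz (fv r))%R.
Proof.
case=> [rA [hF _]] [_ hmin].
have hF' : forall x y, (x,y) \in F -> e x y by move=> x y /hF /andP[].
have [p [pth plast pcost]] := UB_rec hF' (leqnn #|D r|).
have sFC : subrel (FC F) (fun a b => b \in ch a) by move=> a b /andP[].
have hP : max_path_from A F r (r :: p).
  exists p; split => //.
  - by apply: sub_path pth => a b /andP[].
  - by case: (desc_D sFC pth).
  move=> y ly; have ey := hF' _ _ ly.
  case: (boolP (y \in ch (last r p))) => yc.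
    by move: (plast y yc); rewrite ly.
  move: pth {plast pcost} ly ey yc; case/lastP: p => [|q l].
    by move=> _ _ /= ey; rewrite root_nbr_child.
  rewrite rcons_path last_rcons => /andP[_ /andP[lq _]] _ ey yc.
  have -> : y = last r q.
    apply: (nonchild_unique ey) => //.
    - by rewrite esym child_e.
    - exact: child_not_parent.
  by apply: mem_rcons_sub; exact: mem_last.
have := hmin _ hP; rewrite eqxx /= in pcost; move: pcost; lia.
Qed.

Definition istar w := find (fun i => fv w == i + nth 0 (cs w) i) (iota 0 (size (cs w))).
Definition srt w := sort (relpre fv geq) (ch w).
Definition Ch w := take (istar w).+1 (srt w).

Lemma cs_map w : cs w = map fv (srt w).
Proof. by rewrite /cs sort_map. Qed.

Lemma size_cs w : size (cs w) = size (ch w).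
Proof. by rewrite /cs size_sort size_map. Qed.

Lemma istar_spec w : ch w != [::] ->
  istar w < size (cs w) /\ fv w = istar w + nth 0 (cs w) (istar w).
Proof.
move=> nz; have sz : 0 < size (cs w) by rewrite size_cs; case: (ch w) nz.
have [i isz hi] := fmax_attain sz.
have hh : has (fun i => fv w == i + nth 0 (cs w) i) (iota 0 (size (cs w))).
  apply/hasP; exists i; first by rewrite mem_iota.
  by rewrite /= (f_rec w) hi.
have lt := hh; rewrite has_find size_iota in lt.
have := nth_find 0 hh; rewrite nth_iota // add0n => /eqP.
by rewrite -/(istar w).
Qed.

Lemma Ch_sub w u : u \in Ch w -> u \in ch w.
Proof. by move/mem_take; rewrite mem_sort. Qed.

Lemma Ch_uniq w : uniq (Ch w).
Proof. by rewrite take_uniq // sort_uniq ch_uniq. Qed.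

Lemma size_Ch w : ch w != [::] -> size (Ch w) = (istar w).+1.
Proof.
move=> nz; have [lt _] := istar_spec nz.
by rewrite size_takel // size_sort -(size_cs w).
Qed.

Lemma Ch_nil w : Ch w = [::] -> ch w = [::].
Proof.
move=> h; apply/eqP; apply/negP => /negP nz.
by have := size_Ch nz; rewrite h.
Qed.

Lemma Ch_ge w u : u \in Ch w -> nth 0 (cs w) (istar w) <= fv u.
Proof.
move=> uin; have nz : ch w != [::] by move: (Ch_sub uin); case: (ch w).
have [lt _] := istar_spec nz.
case/(nthP u): uin => j jsz jeq.
have jk : j < (istar w).+1 by move: jsz; rewrite (size_Ch nz).
have js : j < size (srt w) by move: lt; rewrite (size_cs w) -(size_sort (relpre fv geq)) -/(srt w); lia.
rewrite nth_take // in jeq.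
have -> : fv u = nth 0 (cs w) j by rewrite cs_map (nth_map u) // jeq.
apply: nth_sorted_le => //. rewrite /cs. apply: sort_sorted => a b; exact: leq_total.
Qed.

Lemma Ch_eq w : ch w != [::] -> exists2 u, u \in Ch w & fv u = nth 0 (cs w) (istar w).
Proof.
move=> nz; have [lt _] := istar_spec nz.
have js : istar w < size (srt w) by move: lt; rewrite (size_cs w) /srt size_sort.
case: (ch w) nz js => [//|u0 l] _ js.
exists (nth u0 (srt w) (istar w)).
  rewrite -(nth_take u0 (ltnSn (istar w))); apply: mem_nth.
  by rewrite size_takel.
by rewrite cs_map (nth_map u0).
Qed.

Definition ChR := fun a b => b \in Ch a.
Definition AA := [set x | connect ChR r x].
Definition FF := [set p : V * V | ((p.1 \in AA) && (p.2 \in Ch p.1)) ||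
                                  ((p.2 \in AA) && (p.1 \in Ch p.2))].

Lemma rA : r \in AA.
Proof. by rewrite inE connect0. Qed.

Lemma A_Ch x u : x \in AA -> u \in Ch x -> u \in AA.
Proof. by rewrite !inE => ca cu; apply: connect_trans ca (connect1 cu). Qed.

Lemma path_A x p : x \in AA -> path ChR x p -> last x p \in AA.
Proof.
elim: p x => [//|y p IH] x xA /andP[xy pth] /=; apply: IH pth; exact: A_Ch xA xy.
Qed.

Lemma pathF x p : x \in AA -> path ChR x p -> path (fun a b => (a,b) \in FF) x p.
Proof.
elim: p x => [//|y p IH] x xA /andP[xy pth] /=.
have xy' : y \in Ch x := xy.
by rewrite inE /= xA xy' /= (IH y) // (A_Ch xA xy).
Qed.

Lemma FF_sym x y : ((x,y) \in FF) = ((y,x) \in FF).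
Proof. by rewrite !inE /= orbC. Qed.

Lemma subtree_FF : subtree_at e r AA FF.
Proof.
split; first exact: rA.
split.
  move=> x y; rewrite inE /= => /orP[/andP[xA yx]|/andP[yA xy]].
    by rewrite child_e ?(Ch_sub yx) // xA (A_Ch xA yx).
  by rewrite esym child_e ?(Ch_sub xy) // yA (A_Ch yA xy).
split; first by move=> x y; rewrite FF_sym.
have cs' : connect_sym (fun a b => (a,b) \in FF).
  apply: sym_connect_sym => a b; exact: FF_sym.
have cr : forall x, x \in AA -> connect (fun a b => (a,b) \in FF) r x.
  move=> x; rewrite inE => /connectP[p pth ->].
  by apply/connectP; exists p => //; apply: pathF rA pth.
move=> x y xA yA; apply: connect_trans (cr y yA); rewrite cs'; exact: cr.
Qed.

Lemma connect_pred (R : rel V) a x : connect R a x -> x != a ->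
  exists2 y, connect R a y & R y x.
Proof.
case/connectP => p pth ->; move: pth; case/lastP: p => [|q l]; first by rewrite eqxx.
rewrite rcons_path last_rcons => /andP[pq ql] _.
by exists (last a q) => //; apply/connectP; exists q.
Qed.

Lemma deg_A x : x \in AA -> degS FF x = size (Ch x) + (x != r).
Proof.
move=> xA; rewrite /degS.
have -> : [set y | (x,y) \in FF] =
    [set y in Ch x] :|: [set y | (y \in AA) && (x \in Ch y)].
  by apply/setP => y; move: (xA); rewrite !inE /= => ->.
rewrite cardsU.
have -> : [set y in Ch x] :&: [set y | (y \in AA) && (x \in Ch y)] = set0.
  apply/setP => y; rewrite !inE; apply/negbTE; apply/negP => /andP[yx /andP[_ xy]].
  by move: (child_not_parent (Ch_sub yx)); rewrite (Ch_sub xy).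
rewrite cards0 subn0 cardsE; have uq := Ch_uniq x; move/card_uniqP: uq => ->.
congr (_ + _).
case: (eqVneq x r) => [->|xr] /=.
  apply/eqP; rewrite cards_eq0; apply/eqP/setP => y; rewrite !inE.
  by apply/negbTE; apply/negP => /andP[_ /Ch_sub]; rewrite (negbTE (root_not_child y)).
move: (xA); rewrite inE => cx.
have [y cy yx] := connect_pred cx xr.
have -> : [set y | (y \in AA) && (x \in Ch y)] = [set y].
  apply/setP => z; rewrite !inE; apply/idP/idP => [/andP[_ xz]|/eqP->].
    by apply/eqP; apply: parent_unique (Ch_sub xz) (Ch_sub yx).
  by rewrite cy; exact: yx.
by rewrite cards1.
Qed.

Lemma fv_leaf x : ch x = [::] -> fv x = 0.
Proof. by move=> h; rewrite f_rec /cs h /= fmax_nil. Qed.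

Lemma u_not_r x u : u \in Ch x -> (u == r) = false.
Proof.
move=> ux; apply/negbTE/negP => /eqP ur; move: (Ch_sub ux).
by rewrite ur (negbTE (root_not_child x)).
Qed.

Lemma LB2 p x : x \in AA -> path ChR x p -> Ch (last x p) = [::] ->
  ((fv x)%:Z - 1 - (nat_of_bool (x == r))%:Z <= path_cost FF (x :: p))%R.
Proof.
elim: p x => [|u p IH] x xA.
  move=> _ /= h; rewrite /path_cost big_cons big_nil (deg_A xA) h /=.
  rewrite (fv_leaf (Ch_nil h)); case: (x == r) => /=; lia.
move=> /andP[xu pth] /= hl.
have := IH u (A_Ch xA xu) pth hl; rewrite (u_not_r xu) /= => ih.
have nz : ch x != [::] by move: (Ch_sub xu); case: (ch x).
have [_ fx] := istar_spec nz.
have fu := Ch_ge xu.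
have sz := size_Ch nz.
rewrite /path_cost big_cons -/(path_cost FF (u :: p)) (deg_A xA) sz.
move: ih fx fu; case: (x == r) => /=; lia.
Qed.

Lemma LB1 n x : #|D x| <= n -> x \in AA -> exists p, [/\ path ChR x p, Ch (last x p) = [::] &
  path_cost FF (x :: p) = ((fv x)%:Z - 1 - (nat_of_bool (x == r))%:Z)%R].
Proof.
elim: n x => [|n IH] x hx xA; first by (move: (D_pos x); lia).
case: (eqVneq (ch x) [::]) => [h|nz].
  have hC : Ch x = [::] by rewrite /Ch /srt h.
  exists [::]; split => //.
  rewrite /path_cost big_cons big_nil (deg_A xA) hC /= (fv_leaf h).
  case: (x == r) => /=; lia.
have [u ux fu] := Ch_eq nz.
have [p [pth hl hc]] := IH u (leq_trans (D_lt (Ch_sub ux)) hx) (A_Ch xA ux).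
exists (u :: p); split => //=; first by rewrite /ChR ux.
have [_ fx] := istar_spec nz.
have sz := size_Ch nz.
rewrite (u_not_r ux) /= in hc.
rewrite /path_cost big_cons -/(path_cost FF (u :: p)) (deg_A xA) sz hc.
move: fx fu; case: (x == r) => /=; lia.
Qed.

Lemma FtoCh p x z : path (fun a b => (a,b) \in FF) x p -> uniq (z :: x :: p) ->
  x \in Ch z -> path ChR x p.
Proof.
elim: p x z => [//|y p IH] x z /andP[fxy pth] uq xz.
move: fxy; rewrite inE /= => /orP[/andP[_ yx]|/andP[_ xy]].
  apply/andP; split => //; apply: IH pth _ yx.
  by case/andP: uq.
have yz := parent_unique (Ch_sub xy) (Ch_sub xz).
by move: uq; rewrite yz /= !inE eqxx !orbT.
Qed.

Lemma LB_main : exists (A : {set V}) (F : {set V * V}) (m : int),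
  [/\ subtree_at e r A F, is_min_cost A F r m & Posz (fv r) = (2 + m)%R].
Proof.
exists AA, FF, ((fv r)%:Z - 2)%R; split; first exact: subtree_FF; last by lia.
have sCh : subrel ChR (fun a b => b \in ch a) by move=> a b /Ch_sub.
split.
  have [p [pth hl hc]] := LB1 (leqnn #|D r|) rA.
  exists (r :: p); split; last by rewrite hc eqxx /=; lia.
  exists p; split => //.
  - exact: rA.
  - exact: pathF rA pth.
  - by case: (desc_D sCh pth).
  move=> y; rewrite inE /= => /orP[/andP[_]|/andP[_ ly]]; first by rewrite hl.
  move: pth {hl hc} ly; case/lastP: p => [|q l].
    by move=> _ /= /Ch_sub; rewrite (negbTE (root_not_child y)).
  rewrite rcons_path last_rcons => /andP[_ lq] ly.
  have -> : y = last r q by apply: parent_unique (Ch_sub ly) (Ch_sub lq).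
  by apply: mem_rcons_sub; exact: mem_last.
move=> P [p [-> _ pth uq mx]].
have cp : path ChR r p.
  case: p pth uq mx => [//|y p] /andP[ry pth] uq _.
  have yr : y \in Ch r.
    move: ry; rewrite inE /= => /orP[/andP[_ //]|/andP[_ /Ch_sub]].
    by rewrite (negbTE (root_not_child y)).
  by apply/andP; split => //; apply: FtoCh pth uq yr.
have hl : Ch (last r p) = [::].
  case hC: (Ch (last r p)) => [//|u l]; exfalso.
  have uin : u \in Ch (last r p) by rewrite hC mem_head.
  have lA := path_A rA cp.
  have : (last r p, u) \in FF by rewrite inE /= lA uin.
  move/mx => urp.
  have := desc_last sCh cp urp; have := D_lt (Ch_sub uin); lia.
have := LB2 rA cp hl; rewrite eqxx /=; lia.
Qed.

End Tree.

Unset Implicit Arguments.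

Theorem proposition4p2 (V : finType) (e : rel V) (v : V) :
  is_tree e -> 3 <= #|V| ->
  (exists (A : {set V}) (F : {set V * V}) (m : int),
      [/\ subtree_at e v A F, is_min_cost A F v m &
          Posz (f_val e v v) = (2 + m)%R]) /\
  (forall (A : {set V}) (F : {set V * V}) (m : int),
      subtree_at e v A F -> is_min_cost A F v m ->
      (2 + m <= Posz (f_val e v v))%R).
Proof.
case=> [esym [eirr [econn eacyc]]] _; split.
  exact: LB_main.
move=> A F m; exact: UB_main.
Qed.
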